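(* Let $m\ge2$ and let $A(\mathbf z)$, $\mathbf z=(z_1,\dots,z_m)$, be the $(2m+1)\times(2m+1)$ matrix whose rows and columns are indexed, in this order, by $s_0,s_1,\dots,s_m,s_1^{-1},\dots,s_m^{-1}$, with entries: column $s_0$ is zero; row $s_0$ has entry $z_j$ in columns $s_j$ and $s_j^{-1}$ ($1\le j\le m$); row $s_i$ ($1\le i\le m$) has entry $z_j$ in column $s_j$ for all $j$, entry $z_j$ in column $s_j^{-1}$ for $j\ne i$, and $0$ in column $s_i^{-1}$; row $s_i^{-1}$ has entry $z_j$ in column $s_j^{-1}$ for all $j$, entry $z_j$ in column $s_j$ for $j\ne i$, and $0$ in column $s_i$. Then, as a polynomial identity, $$\det(I-A(\mathbf z))=(1-z_1)\cdots(1-z_m)\,R(\mathbf z),\qquad R(\mathbf z)=1-\sum_{l=1}^{m}(2l-1)\sum_{1\le i_1<\dots<i_l\le m} z_{i_1}\cdots z_{i_l},$$ where $I$ is the $(2m+1)\times(2m+1)$ identity matrix. *)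

(* Defs.v *)
From mathcomp Require Import all_boot all_order all_algebra.
Set Implicit Arguments. Unset Strict Implicit. Unset Printing Implicit Defensive.
Import GRing.Theory.
Local Open Scope ring_scope.

(* Labels of the rows/columns: s_0, s_j (j : 'I_m), s_j^{-1} (j : 'I_m). *)
Inductive gen (m : nat) := S0 | Sp of 'I_m | Sm of 'I_m.

(* Index i : 'I_(1 + m + m) is decoded in the order
   s_0, s_1, ..., s_m, s_1^{-1}, ..., s_m^{-1}. *)
Definition decode (m : nat) (i : 'I_(1 + m + m)) : gen m :=
  match split i with
  | inl k => match split k with
             | inl _ => @S0 m
             | inr j => Sp j
             end
  | inr j => Sm j
  end.

Definition entryA (R : comNzRingType) (m : nat) (z : 'I_m -> R)
  (r c : gen m) : R :=
  match r, c with
  | _, S0 => 0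
  | S0, Sp j => z j
  | S0, Sm j => z j
  | Sp i, Sp j => z j
  | Sp i, Sm j => if j == i then 0 else z j
  | Sm i, Sm j => z j
  | Sm i, Sp j => if j == i then 0 else z j
  end.

Definition matA (R : comNzRingType) (m : nat) (z : 'I_m -> R)
  : 'M[R]_(1 + m + m) :=
  \matrix_(r, c) entryA z (decode r) (decode c).

Definition polyR (R : comNzRingType) (m : nat) (z : 'I_m -> R) : R :=
  1 - \sum_(1 <= l < m.+1)
        ((2 * l - 1)%N%:R * \sum_(S : {set 'I_m} | #|S| == l) \prod_(i in S) z i).

(* Main.v *)
Require Import Defs.
From mathcomp Require Import all_boot all_order all_algebra.
From mathcomp Require Import ring.
Import GRing.Theory.
Local Open Scope ring_scope.

Section Rank1.
Variable R : comNzRingType.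

Lemma liftF n (i : 'I_n) : (lift ord0 i == ord0 :> 'I_n.+1) = false.
Proof. by rewrite eq_sym (negbTE (neq_lift _ _)). Qed.

Lemma lift0_eq n (i j : 'I_n) : (lift ord0 i == lift ord0 j :> 'I_n.+1) = (i == j).
Proof. by rewrite (inj_eq (@lift_inj _ ord0)). Qed.

Lemma det_rank1 n (a u v : 'I_n -> R) :
  \det (\matrix_(i,j) ((i == j)%:R * a i + u i * v j)) =
  \prod_i a i + \sum_j (u j * v j * \prod_(k | k != j) a k).
Proof.
elim: n a u v => [|n IH] a u v.
  by rewrite det_mx00 big_ord0 big_ord0 addr0.
set M := \matrix_(i,j) _.
pose B : 'M[R]_n.+1 := \matrix_(i,j) (if i == ord0 then (ord0 == j)%:R else M i j).
pose C : 'M[R]_n.+1 := \matrix_(i,j) (if i == ord0 then v j else M i j).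
have -> : \det M = a ord0 * \det B + u ord0 * \det C.
  apply: (@determinant_multilinear _ _ _ _ _ ord0).
  - by apply/rowP => j; rewrite !mxE eqxx mulrC.
  - by apply/matrixP => i j; rewrite !mxE liftF.
  - by apply/matrixP => i j; rewrite !mxE liftF.
have -> : \det B = \prod_i a (lift ord0 i) + \sum_j (u (lift ord0 j) * v (lift ord0 j) * \prod_(k | k != j) a (lift ord0 k)).
  rewrite (expand_det_row _ ord0) big_ord_recl big1 ?addr0; last first.
    by move=> i _; rewrite /B mxE (eqxx ord0) eq_sym liftF mul0r.
  rewrite /B mxE (eqxx ord0) mul1r /cofactor expr0 mul1r -IH.
  congr (\det _); apply/matrixP => i j; by rewrite !mxE liftF lift0_eq.
pose F : 'M[R]_n.+1 := \matrix_(i,j) ((j == ord0)%:R * ((i != ord0)%:R * u i)).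
pose N : 'M[R]_n.+1 := \matrix_(i,j) (if i == ord0 then v j else (i == j)%:R * a i).
have -> : C = (1%:M + F) *m N.
  apply/matrixP => i j; rewrite mulmxDl mul1mx !mxE (bigD1 ord0) //= big1; last first.
    by move=> k k0; rewrite /F mxE (negbTE k0) /= mulr0n !mul0r.
  rewrite /F /N !mxE (eqxx ord0) mul1r addr0.
  case: (i =P ord0) => [->|/eqP/negbTE i0]; rewrite ?i0 /=.
    by rewrite !mul0r addr0.
  by rewrite mul1r.
rewrite det_mulmx.
have -> : \det (1%:M + F) = 1.
  rewrite det_trig; last first.
    apply/is_trig_mxP => i j ij; rewrite !mxE.
    have /negbTE -> : i != j by rewrite neq_ltn ij.
    have -> : (j == ord0) = false by apply/eqP => j0; move: ij; rewrite j0.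
    by rewrite /= mulr0n !mul0r addr0.
  apply: big1 => i _; rewrite !mxE eqxx /=; case: eqP => _ /=; by rewrite ?mulr0n ?mul0r ?mulr0 ?addr0.
have -> : \det N = v ord0 * \prod_i a (lift ord0 i).
  rewrite -det_tr det_trig; last first.
    apply/is_trig_mxP => i j ij; rewrite !mxE; case: eqP => [j0|_].
      by move: ij; rewrite j0.
    have /negbTE -> : j != i by rewrite neq_ltn ij orbT.
    by rewrite /= mulr0n mul0r.
  rewrite big_ord_recl !mxE (eqxx ord0); congr (_ * _); apply: eq_bigr => i _.
  by rewrite !mxE liftF eqxx /= mulr1n mul1r.
rewrite mul1r big_ord_recl [in RHS]big_ord_recl.
have e1 : \prod_(k | k != ord0) a k = \prod_i a (lift ord0 i).
  by rewrite big_mkcond big_ord_recl /= mul1r.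
have e2 : a ord0 * \sum_j (u (lift ord0 j) * v (lift ord0 j) * \prod_(k | k != j) a (lift ord0 k))
   = \sum_(i < n) (u (lift ord0 i) * v (lift ord0 i) * \prod_(k | k != lift ord0 i) a k).
  rewrite big_distrr; apply: eq_bigr => j _.
  rewrite (bigD1_ord ord0) //= mulrCA; congr (_ * (_ * _)); apply: eq_bigl => k.
rewrite e1 -e2; ring.
Qed.
End Rank1.

Lemma decode0 m : decode (ord0 : 'I_(1 + m + m)) = S0 m.
Proof.
have -> : (ord0 : 'I_(1 + m + m)) = lshift m (lshift m (ord0 : 'I_1)) by apply: val_inj.
by rewrite /decode (unsplitK (inl _ : 'I_(1+m) + 'I_m)) (unsplitK (inl _ : 'I_1 + 'I_m)).
Qed.

Lemma decodeL m (k : 'I_m) : decode (lift ord0 (lshift m k) : 'I_(1 + m + m)) = Sp k.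
Proof.
have -> : (lift ord0 (lshift m k) : 'I_(1 + m + m)) = lshift m (rshift 1 k) by apply: val_inj.
by rewrite /decode (unsplitK (inl _ : 'I_(1+m) + 'I_m)) (unsplitK (inr _ : 'I_1 + 'I_m)).
Qed.

Lemma decodeR m (k : 'I_m) : decode (lift ord0 (rshift m k) : 'I_(1 + m + m)) = Sm k.
Proof.
have -> : (lift ord0 (rshift m k) : 'I_(1 + m + m)) = rshift (1 + m) k by apply: val_inj.
by rewrite /decode (unsplitK (inr _ : 'I_(1+m) + 'I_m)).
Qed.



Lemma eLL m (k l : 'I_m) : (lift ord0 (lshift m k) == lift ord0 (lshift m l) :> 'I_(m+m).+1) = (k == l).
Proof. by rewrite lift0_eq (inj_eq (@lshift_inj _ _)). Qed.
Lemma eRR m (k l : 'I_m) : (lift ord0 (rshift m k) == lift ord0 (rshift m l) :> 'I_(m+m).+1) = (k == l).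
Proof. by rewrite lift0_eq (inj_eq (@rshift_inj _ _)). Qed.
Lemma eLR m (k l : 'I_m) : (lift ord0 (lshift m k) == lift ord0 (rshift m l) :> 'I_(m+m).+1) = false.
Proof. by rewrite lift0_eq -val_eqE /= ltn_eqF // ltn_addr. Qed.
Lemma eRL m (k l : 'I_m) : (lift ord0 (rshift m k) == lift ord0 (lshift m l) :> 'I_(m+m).+1) = false.
Proof. by rewrite lift0_eq -val_eqE /= gtn_eqF // ltn_addr. Qed.

Lemma entry1 (R : comNzRingType) m (z : 'I_m -> R) (i j : 'I_(m + m)) :
  let Z := \matrix_(i, j) z j : 'M[R]_m in
  let D := diag_mx (\row_j z j) in
  (1%:M - matA z) (lift ord0 i) (lift ord0 j) =
    block_mx (1%:M - Z) (D - Z) (D - Z) (1%:M - Z) i j.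
Proof.
move=> Z D.
case: (split_ordP i) => k ->; case: (split_ordP j) => l ->.
- by rewrite block_mxEul !mxE decodeL decodeL eLL /=.
- rewrite block_mxEur !mxE decodeL decodeR eLR /=.
  by have [->|ne] := eqVneq l k; rewrite ?eqxx ?mulr1n ?subrr // eq_sym (negbTE ne) mulr0n.
- rewrite block_mxEdl !mxE decodeR decodeL eRL /=.
  by have [->|ne] := eqVneq l k; rewrite ?eqxx ?mulr1n ?subrr // eq_sym (negbTE ne) mulr0n.
- by rewrite block_mxEdr !mxE decodeR decodeR eRR /=.
Qed.

Lemma step1 (R : comNzRingType) m (z : 'I_m -> R) :
  let Z := \matrix_(i, j) z j : 'M[R]_m in
  let D := diag_mx (\row_j z j) in
  \det (1%:M - matA z) = \det (block_mx (1%:M - Z) (D - Z) (D - Z) (1%:M - Z)).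
Proof.
move=> Z D.
rewrite (expand_det_col _ ord0) big_ord_recl big1 ?addr0; last first.
  move=> i _; rewrite !mxE liftF decode0 /=.
  by case: (decode _) => *; rewrite /= mulr0n subr0 mul0r.
rewrite !mxE decode0 (eqxx ord0) /= subr0 mul1r /cofactor expr0 mul1r.
congr (\det _); apply/matrixP => i j; rewrite [LHS]mxE [LHS]mxE.
exact: entry1.
Qed.

Section Sums.
Variable R : comNzRingType.
Variable m : nat.
Variable z : 'I_m -> R.

Lemma prod_ifE (a : 'I_m -> R) (J : {set 'I_m}) :
  \prod_i (if i \in J then z i else a i) = \prod_(i in J) z i * \prod_(i in ~: J) a i.
Proof.
rewrite (bigID (mem J)) /=; congr (_ * _); apply: eq_big => i; rewrite ?in_setC //.
  by move=> ->.
by move/negbTE ->.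
Qed.

Lemma prod1D : \prod_i (1 + z i) = \sum_(J : {set 'I_m}) \prod_(i in J) z i.
Proof.
rewrite (eq_bigr (fun i => z i + 1)) => [|i _]; last by rewrite addrC.
rewrite (@bigA_distr R 0 1 *%R +%R); apply: eq_bigr => J _.
by rewrite prod_ifE big1_eq mulr1.
Qed.

Lemma sum_card :
  \sum_j (z j * \prod_(k | k != j) (1 + z k)) =
  \sum_(J : {set 'I_m}) (#|J|%:R * \prod_(i in J) z i).
Proof.
transitivity (\sum_j \sum_(J : {set 'I_m}) ((j \in J)%:R * \prod_(i in J) z i)).
  apply: eq_bigr => j _.
  rewrite (eq_bigr (fun k => z k + (k != j)%:R)) => [|k kj]; last by rewrite kj addrC.
  have -> : z j * \prod_(k | k != j) (z k + (k != j)%:R) = \prod_k (z k + (k != j)%:R).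
    by rewrite [RHS](bigD1 j) //= eqxx /= mulr0n addr0.
  rewrite (@bigA_distr R 0 1 *%R +%R); apply: eq_bigr => J _.
  rewrite prod_ifE mulrC; congr (_ * _).
  case: (boolP (j \in J)) => jJ /=.
    rewrite mulr1n; apply: big1 => i; rewrite in_setC => iJ.
    by have -> : i != j by apply: contraNneq iJ => ->.
  by rewrite (bigD1 j) ?in_setC //= eqxx /= mulr0n mul0r.
rewrite exchange_big; apply: eq_bigr => J _.
rewrite -big_distrl /=; congr (_ * _).
rewrite -sum1_card natr_sum [RHS]big_mkcond /=; apply: eq_bigr => i _.
by case: (i \in J).
Qed.
End Sums.

Lemma sum_by_card (m : nat) (R : comNzRingType) (f : nat -> {set 'I_m} -> R) :
  \sum_(l < m.+1) \sum_(S : {set 'I_m} | #|S| == l) f l S = \sum_(S : {set 'I_m}) f #|S| S.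
Proof.
under eq_bigr do rewrite big_mkcond.
rewrite exchange_big /=; apply: eq_bigr => S _.
have hS : (#|S| < m.+1)%N by rewrite ltnS (leq_trans (max_card _)) // card_ord.
rewrite (bigD1 (Ordinal hS)) //= eqxx big1 ?addr0 // => l /negbTE hl.
case: eqP => // e; have el : l = Ordinal hS by apply: val_inj; rewrite /= -e.
by move: hl; rewrite el eqxx.
Qed.

Lemma polyRE (R : comNzRingType) m (z : 'I_m -> R) :
  polyR z = \prod_i (1 + z i) + \sum_j (- 2%:R * z j * \prod_(k | k != j) (1 + z k)).
Proof.
rewrite /polyR.
have -> : \sum_(1 <= l < m.+1)
        ((2 * l - 1)%N%:R * \sum_(S : {set 'I_m} | #|S| == l) \prod_(i in S) z i)
   = \sum_(S : {set 'I_m}) ((2 * #|S| - 1)%N%:R * \prod_(i in S) z i).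
  rewrite -(@sum_by_card m R (fun l S => (2 * l - 1)%N%:R * \prod_(i in S) z i)) -(big_mkord xpredT (fun l => \sum_(S : {set 'I_m} | #|S| == l) (2 * l - 1)%N%:R * \prod_(i in S) z i)).
  rewrite [in RHS]big_ltn // [X in _ = X + _]big1 ?add0r; last by move=> S _; rewrite muln0 sub0n mulr0n mul0r.
  by apply: eq_bigr => l _; rewrite big_distrr.
rewrite [X in _ = _ + X](eq_bigr (fun j => - 2%:R * (z j * \prod_(k | k != j) (1 + z k)))); last by move=> j _; rewrite mulrA.
rewrite -big_distrr /= sum_card prod1D.
suff h : \sum_(J : {set 'I_m}) (\prod_(i in J) z i + -2%:R * (#|J|%:R * \prod_(i in J) z i)
     + (2 * #|J| - 1)%N%:R * \prod_(i in J) z i) = 1.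
  rewrite -{1}h !big_split /= -mulr_sumr; ring.
rewrite (bigD1 set0) //= [X in _ + X]big1.
  rewrite addr0 cards0 muln0 sub0n mulr0n (big1 _ _ (fun i => _)); last by move=> i; rewrite in_set0.
  ring.
move=> S /set0Pn [x xS].
have s1 : (1 <= 2 * #|S|)%N by rewrite muln_gt0 /= card_gt0; apply/set0Pn; exists x.
rewrite natrB // natrM; ring.
Qed.

Theorem lemma1 (R : comNzRingType) (m : nat) (hm : (2 <= m)%N) (z : 'I_m -> R) :
  \det (1%:M - matA z) = (\prod_(i < m) (1 - z i)) * polyR z.
Proof.
rewrite step1 /=.
set Z := \matrix_(i, j) z j : 'M[R]_m.
set D := diag_mx (\row_j z j).
set X := 1%:M - Z; set W := D - Z.
have hb : block_mx 1%:M 1%:M 0 1%:M *m (block_mx X W W X *m block_mx 1%:M (-1%:M) 0 1%:M)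
    = block_mx (X + W) 0 W (X - W).
  rewrite !mulmx_block !(mul1mx, mulmx1, mul0mx, mulmx0, mulmxN, addr0, add0r).
  congr block_mx.
  - by rewrite addrC addrA addrK addNr.
  - by rewrite addrC.
have := congr1 determinant hb.
rewrite !det_mulmx !det_ublock det_lblock !det1 !mul1r mulr1 => ->.
have -> : X - W = diag_mx (\row_j (1 - z j)).
  apply/matrixP => i j; rewrite !mxE.
  by case: (i == j); rewrite /= ?mulr1n ?mulr0n ?mul1r ?mul0r; ring.
have -> : X + W = \matrix_(i, j) ((i == j)%:R * (1 + z i) + (- 2%:R) * z j).
  apply/matrixP => i j; rewrite !mxE.
  by case: (i == j); rewrite /= ?mulr1n ?mulr0n ?mul1r ?mul0r; ring.
rewrite det_diag det_rank1 polyRE mulrC; congr (_ * _).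
by apply: eq_bigr => i _; rewrite mxE.
Qed.
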